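(* Consider an inventory system as in the context, and suppose in addition that $G$ is twice differentiable on $(0,\infty)$ with $l\le G''(y)\le L$ for all $y>0$, for constants $0<l\le L$. Let $$M=\frac{\Delta+\sum_{k=0}^{N-1}\mu_k}{N},\qquad u=\mathrm{LS}(\mu_0+\Delta,\mu_1,\dots,\mu_{N-1}),$$ $$S_u=\sum_{k=0}^{N-1}(u_k-M)^2,\qquad S_\mu=(\mu_0+\Delta-M)^2+\sum_{k=1}^{N-1}(\mu_k-M)^2.$$ Then $$J_{\pi^{\mathrm{my}}}(0)-J^*(0)\ \ge\ \frac{l}{2}\Big(S_\mu+\sum_{k=0}^{N-2}\sigma_k^2\Big)-\frac{L}{2}\Big(S_u+\sum_{k=0}^{N-2}\sigma_k^2\Big).$$
   Context: Inventory system: $N\ge1$; $G:\mathbb{R}_{\ge0}\to\mathbb{R}_{\ge0}$ is strictly convex and increasing with $G(0)=0$. Demands $w_0,\dots,w_{N-1}$ are independent random variables; $w_k$ has mean $\mu_k$, variance $\sigma_k^2$, and support exactly $[\mu_k-\Delta,\mu_k+\Delta]$, where $\Delta\ge0$ and $\mu_k-\Delta>0$ for all $k$. A (Markov) policy is a sequence $\pi=(\pi_0,\dots,\pi_{N-1})$ of measurable maps $\pi_k:\mathbb{R}_{\ge0}\to\mathbb{R}_{\ge0}$; the state evolves by $x_0=0$, $x_{k+1}=x_k+\pi_k(x_k)-w_k$. A policy is admissible if $x_k\ge0$ almost surely for all $k\in\{1,\dots,N\}$. Its expected cost is $J_\pi(0)=\sum_{k=0}^{N-1}\mathbb{E}[G(\pi_k(x_k))]$,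 and $J^*(0)$ denotes the infimum of $J_\pi(0)$ over admissible policies (the optimal cost). The myopic policy is $\pi^{\mathrm{my}}_k(x)=\max\{0,\mu_k+\Delta-x\}$. Block-averaging procedure $\mathrm{LS}$: given a finite sequence $v=(v_0,\dots,v_{N-1})$ of positive reals, define indices $0=k_0<k_1<\dots<k_n=N$ recursively: if $k_l<N$, let $k_{l+1}=k_l+j^*$, where $j^*$ is the largest element of $\arg\max_{j\in\{1,\dots,N-k_l\}}\frac{1}{j}\sum_{i=k_l}^{k_l+j-1}v_i$; stop when $k_n=N$. Then $\mathrm{LS}(v)=(u_0,\dots,u_{N-1})$ with $u_i=\frac{1}{k_{l+1}-k_l}\sum_{m=k_l}^{k_{l+1}-1}v_m$ for $k_l\le i<k_{l+1}$. *)

(* Defs.v *)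
From HB Require Import structures.
From mathcomp Require Import all_boot all_order all_algebra.
From mathcomp Require Import all_classical all_reals all_analysis.
Set Implicit Arguments. Unset Strict Implicit. Unset Printing Implicit Defensive.
Import Order.TTheory GRing.Theory Num.Theory.
Import numFieldNormedType.Exports.
Local Open Scope classical_set_scope.
Local Open Scope ring_scope.

Definition avg {R : realFieldType} (s : seq R) : R :=
  (\sum_(x <- s) x) / (size s)%:R.

(** the LARGEST j in {1,...,size v} maximizing avg (take j v) *)
Definition best_len {R : realFieldType} (v : seq R) : nat :=
  foldl (fun b j => if avg (take b v) <= avg (take j v) then j else b)
        1%N (iota 1 (size v)).

Fixpoint ls_aux {R : realFieldType} (fuel : nat) (v : seq R) : seq R :=
  match fuel with
  | 0%N => [::]
  | fuel'.+1 =>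
      if v is [::] then [::] else
      let j := best_len v in
      nseq j (avg (take j v)) ++ ls_aux fuel' (drop j v)
  end.

Definition LS {R : realFieldType} (v : seq R) : seq R := ls_aux (size v) v.

Definition mutually_independent {d} {T : measurableType d} {R : realType}
  (P : probability T R) (N : nat) (w : nat -> T -> R) : Prop :=
  forall B : nat -> set R, (forall k, measurable (B k)) ->
    P [set t | forall k, (k < N)%N -> B k (w k t)] =
    (\prod_(k < N) P (w k @^-1` B k))%E.

(** the support (smallest closed set of full measure) of the law of X is S *)
Definition support_is {d} {T : measurableType d} {R : realType}
  (P : probability T R) (X : T -> R) (S : set R) : Prop :=
  P (X @^-1` S) = 1%E /\
  forall U : set R, open U -> U `&` S !=set0 -> (0 < P (X @^-1` U))%E.

Fixpoint state {T : Type} {R : realType} (pi : nat -> R -> R)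
  (w : nat -> T -> R) (k : nat) : T -> R :=
  match k with
  | 0%N => fun _ => 0
  | k'.+1 => fun t => state pi w k' t + pi k' (state pi w k' t) - w k' t
  end.

Definition admissible {d} {T : measurableType d} {R : realType}
  (P : probability T R) (N : nat) (w : nat -> T -> R) (pi : nat -> R -> R) : Prop :=
  (forall k, (k < N)%N -> measurable_fun setT (pi k) /\ forall x, 0 <= pi k x) /\
  (forall k, (1 <= k <= N)%N -> {ae P, forall t, 0 <= state pi w k t}).

Definition cost {d} {T : measurableType d} {R : realType}
  (P : probability T R) (N : nat) (G : R -> R) (w : nat -> T -> R)
  (pi : nat -> R -> R) : \bar R :=
  (\sum_(k < N) \int[P]_t (G (pi k (state pi w k t)))%:E)%E.

Definition opt_cost {d} {T : measurableType d} {R : realType}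
  (P : probability T R) (N : nat) (G : R -> R) (w : nat -> T -> R) : \bar R :=
  ereal_inf [set cost P N G w pi | pi in admissible P N w].

Definition myopic {R : realType} (mu : nat -> R) (Delta : R) : nat -> R -> R :=
  fun k x => Num.max 0 (mu k + Delta - x).

(* Main.v *)
Require Import Defs.
From HB Require Import structures.
From mathcomp Require Import all_boot all_order all_algebra.
From mathcomp Require Import all_classical all_reals all_analysis.
From mathcomp Require Import zify ring lra measurable_realfun.
Import Order.TTheory GRing.Theory Num.Theory.
Import numFieldNormedType.Exports.
Local Open Scope classical_set_scope.
Local Open Scope ring_scope.
Section LSsec.
Variable R : realFieldType.
Implicit Types (v s : seq R).

Lemma sum_avg s : (0 < size s)%N -> \sum_(x <- s) x = avg s * (size s)%:R.
Proof. by move=> h; rewrite /avg divfK // pnatr_eq0 -lt0n. Qed.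

Lemma foldl_best v (s : seq nat) b :
  (1 <= b <= size v)%N -> all (fun j => 1 <= j <= size v)%N s ->
  let b' := foldl (fun b j => if avg (take b v) <= avg (take j v) then j else b) b s in
  [/\ (1 <= b' <= size v)%N, avg (take b v) <= avg (take b' v) &
      forall j, j \in s -> avg (take j v) <= avg (take b' v)].
Proof.
elim: s b => [|j s IH] b hb /= hs; first by split.
move/andP: hs => [hj hs].
set b1 := (if _ then _ else _).
have hb1 : (1 <= b1 <= size v)%N by rewrite /b1; case: ifP.
have [h1 h2] : avg (take b v) <= avg (take b1 v) /\ avg (take j v) <= avg (take b1 v).
  rewrite /b1; case: ifP => h; first by split.
  by split => //; move/negbT: h; rewrite -ltNge => /ltW.
have [IH1 IH2 IH3] := IH b1 hb1 hs.
split => //; first exact: le_trans IH2.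
move=> i; rewrite inE => /orP[/eqP -> |]; first exact: le_trans IH2.
exact: IH3.
Qed.

Lemma best_len_spec v : (0 < size v)%N ->
  (1 <= best_len v <= size v)%N /\
  forall i, (1 <= i <= size v)%N -> avg (take i v) <= avg (take (best_len v) v).
Proof.
move=> hv.
have hb : (1 <= 1 <= size v)%N by rewrite leqnn.
have hs : all (fun j => 1 <= j <= size v)%N (iota 1 (size v)).
  by apply/allP => j; rewrite mem_iota addnC addn1 ltnS.
have [h1 _ h3] := @foldl_best v _ 1 hb hs.
split => // i hi; apply: h3; rewrite mem_iota addnC addn1 ltnS; exact: hi.
Qed.

Lemma sum_gt (D : R) s : all (fun x => D < x) s -> (0 < size s)%N ->
  D *+ size s < \sum_(x <- s) x.
Proof.
elim: s => [//|x s IH] /= /andP[hx hs] _.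
rewrite big_cons mulrS.
case: s IH hs => [|y s] IH hs; first by rewrite big_nil mulr0n addr0 addr0.
by apply: ltrD => //; apply: IH.
Qed.

Lemma avg_gt (D : R) s : all (fun x => D < x) s -> (0 < size s)%N -> D < avg s.
Proof.
move=> ha hs; rewrite /avg ltr_pdivlMr ?ltr0n // mulr_natr.
exact: sum_gt.
Qed.

Lemma sum_nseq n (a : R) : \sum_(x <- nseq n a) x = a *+ n.
Proof. by elim: n => [|n IH]; rewrite ?big_nil // /= big_cons IH mulrS. Qed.

Lemma ls_aux_spec (D : R) fuel v : (size v <= fuel)%N ->
  let u := ls_aux fuel v in
  [/\ size u = size v,
      all (fun x => D < x) v -> all (fun x => D < x) u,
      forall k, \sum_(x <- take k v) x <= \sum_(x <- take k u) x &
      \sum_(x <- v) x = \sum_(x <- u) x].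
Proof.
elim: fuel v => [|f IH] v hv /=.
  by move: hv; rewrite leqn0 => /nilP ->.
case: v hv => [|x v'] hv; first by [].
set v := x :: v'.
have hsz : (0 < size v)%N by [].
have [/andP[j1 jv] jmax] := @best_len_spec v hsz.
set j := best_len v in j1 jv jmax *.
set A := avg (take j v).
have hsd : (size (drop j v) <= f)%N.
  rewrite size_drop; apply: leq_trans (leq_sub2l (size v) j1) _.
  by rewrite subn1.
have [IH1 IH2 IH3 IH4] := IH (drop j v) hsd.
set u' := ls_aux f (drop j v) in IH1 IH2 IH3 IH4 *.
have szt : size (take j v) = j by rewrite size_take; move: jv; rewrite leq_eqVlt => /orP[/eqP->|->]; rewrite ?ltnn.
have sumj : \sum_(y <- take j v) y = A *+ j.
  by rewrite sum_avg ?szt // mulr_natr.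
split.
- by rewrite size_cat size_nseq IH1 size_drop subnKC.
- move=> ha; rewrite all_cat; apply/andP; split.
    apply/allP => y; rewrite mem_nseq => /andP[_ /eqP ->].
    by apply: avg_gt; [rewrite -(cat_take_drop j v) all_cat in ha; case/andP: ha | rewrite szt].
  by apply: IH2; rewrite -(cat_take_drop j v) all_cat in ha; case/andP: ha.
- move=> k; rewrite take_cat size_nseq.
  case: ltnP => hk.
  + rewrite take_nseq; last exact: ltnW.
    rewrite sum_nseq.
    case: k hk => [|k] hk; first by rewrite take0 big_nil mulr0n.
    have hk' : (1 <= k.+1 <= size v)%N by apply/andP; split => //; apply: ltnW; apply: leq_trans jv.
    have szk : size (take k.+1 v) = k.+1 by rewrite size_take; case/andP: hk' => _; rewrite leq_eqVlt => /orP[/eqP->|->]; rewrite ?ltnn.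
    rewrite sum_avg ?szk // mulr_natr.
    by apply: ler_wMn2r; exact: jmax.
  + rewrite big_cat sum_nseq /=.
    rewrite -{1}(cat_take_drop j v) take_cat szt ltnNge hk /= big_cat sumj.
    by rewrite lerD2l IH3.
- by rewrite big_cat sum_nseq -{1}(cat_take_drop j v) big_cat sumj IH4.
Qed.

Lemma LS_spec (D : R) v : let u := LS v in
  [/\ size u = size v,
      all (fun x => D < x) v -> all (fun x => D < x) u,
      forall k, \sum_(x <- take k v) x <= \sum_(x <- take k u) x &
      \sum_(x <- v) x = \sum_(x <- u) x].
Proof. exact: ls_aux_spec. Qed.

End LSsec.
Section Taylor.
Variable R : realType.

Lemma isder_G (G : R -> R) x : derivable G x 1 -> is_derive x 1 G (derive1 G x).
Proof. by move=> h; rewrite derive1E; apply: derivableP. Qed.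

Lemma taylor_gen (G : R -> R) K M y :
  (forall x, 0 < x -> derivable G x 1) -> 0 < M -> 0 < y ->
  exists2 c, 0 < c /\ 0 <= (c - M) * (y - M) &
   G y - (G M + derive1 G M * (y - M) + K / 2 * (y - M) ^+ 2) =
   ((derive1 G c - K * c) - (derive1 G M - K * M)) * (y - M).
Proof.
move=> dG M0 y0.
pose h := (G - (derive1 G M) \*: id - (K / 2) \*: ((id - cst M) * (id - cst M)) : R -> R).
pose dh := fun x => (derive1 G x - K * x) - (derive1 G M - K * M).
have hd : forall x : R, 0 < x -> is_derive x 1 h (dh x).
  move=> x x0; have hG := @isder_G G x (dG x x0).
  eapply is_derive_eq; [rewrite /h; typeclasses eauto|].
  rewrite /dh /=.
  rewrite /= !subr0 !scaler1 -[(K / 2) *: _]/((K / 2) * _) /=.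
  change ((id - cst M) x) with (x - M); lra.
have hcont : forall a b, 0 < a -> {within `[a, b], continuous h}.
  move=> a b a0; apply: derivable_within_continuous => t; rewrite in_itv /= => /andP[az _].
  have /hd hz : 0 < t by apply: lt_le_trans az.
  exact (@ex_derive _ _ _ _ _ _ _ hz).
have hval : forall z : R, h z = G z - derive1 G M * z - K / 2 * ((z - M) * (z - M)).
  by move=> z.
have [My|yM] := leP M y.
- have hin : forall x, x \in `]M, y[ -> is_derive x 1 h (dh x).
    move=> x; rewrite in_itv /= => /andP[Mx _]; apply: hd; exact: lt_trans Mx.
  have [c] := @MVT_segment R h dh M y My hin (hcont _ _ M0).
  rewrite in_itv /= => /andP[Mc cy] E.
  exists c; first by split; [exact: lt_le_trans Mc| apply: mulr_ge0; rewrite subr_ge0].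
  rewrite -E !hval; rewrite !expr2; ring.
- have hin : forall x, x \in `]y, M[ -> is_derive x 1 h (dh x).
    move=> x; rewrite in_itv /= => /andP[yx _]; apply: hd; exact: lt_trans yx.
  have [c] := @MVT_segment R h dh y M (ltW yM) hin (hcont _ _ y0).
  rewrite in_itv /= => /andP[yc cM] E.
  exists c; first by split; [exact: lt_le_trans yc| rewrite -mulrNN !opprB; apply: mulr_ge0; rewrite subr_ge0 // ltW].
  have -> : dh c * (y - M) = - (dh c * (M - y)) by ring.
  rewrite -E !hval; rewrite !expr2; ring.
Qed.

Lemma mono_pos (f df : R -> R) :
  (forall x : R, 0 < x -> is_derive x 1 f (df x)) -> (forall x : R, 0 < x -> 0 <= df x) ->
  forall x y : R, 0 < x -> x <= y -> f x <= f y.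
Proof.
move=> hd hpos x y x0 xy.
have hin : forall t, t \in `]x, y[ -> is_derive t 1 f (df t).
  move=> t; rewrite in_itv /= => /andP[xt _]; apply: hd; exact: lt_trans xt.
have hc : {within `[x, y], continuous f}.
  apply: derivable_within_continuous => t; rewrite in_itv /= => /andP[xt _].
  have /hd ht : 0 < t by apply: lt_le_trans xt.
  exact (@ex_derive _ _ _ _ _ _ _ ht).
have [c] := @MVT_segment R f df x y xy hin hc.
rewrite in_itv /= => /andP[xc _] E.
rewrite -subr_ge0 E; apply: mulr_ge0; last by rewrite subr_ge0.
apply: hpos; exact: lt_le_trans xc.
Qed.

Lemma taylor_lo (G : R -> R) (l M y : R) :
  (forall x : R, 0 < x -> derivable G x 1 /\ derivable (derive1 G) x 1 /\
     (l <= derive1 (derive1 G) x)) -> 0 < M -> 0 < y ->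
  G M + derive1 G M * (y - M) + l / 2 * (y - M) ^+ 2 <= G y.
Proof.
move=> hG M0 y0.
have [c [c0 hc] E] := @taylor_gen G l M y (fun x hx => (hG x hx).1) M0 y0.
rewrite -subr_ge0 E.
pose k := (derive1 G - l \*: id : R -> R).
have hk : forall x : R, 0 < x -> is_derive x 1 k (derive1 (derive1 G) x - l).
  move=> x x0; have [_ [h2 _]] := hG x x0.
  have h1 := @isder_G (derive1 G) x h2.
  eapply is_derive_eq; [rewrite /k; typeclasses eauto|].
  by rewrite /= scaler1.
have km : forall x y : R, 0 < x -> x <= y -> k x <= k y.
  apply: (@mono_pos k (fun x => derive1 (derive1 G) x - l) hk) => x x0; rewrite subr_ge0; have [_ [_ ]] := hG x x0; done.
have kE : forall x, k x = derive1 G x - l * x by [].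
have M' : (k c - k M) * (y - M) >= 0.
  case: (ltgtP c M) => [cM|Mc|->]; last by rewrite subrr mul0r.
  + have kcM : k c <= k M by apply: km => //; exact: ltW.
    have yM : y - M <= 0.
      rewrite leNgt; apply/negP => yM; move: hc; rewrite leNgt => /negP; apply.
      by rewrite pmulr_llt0 // subr_lt0.
    by apply: mulr_le0 => //; rewrite subr_le0.
  + have kcM : k M <= k c by apply: km => //; exact: ltW.
    have yM : 0 <= y - M.
      rewrite leNgt; apply/negP => yM; move: hc; rewrite leNgt => /negP; apply.
      by rewrite pmulr_rlt0 ?subr_gt0.
    by apply: mulr_ge0 => //; rewrite subr_ge0.
by move: M'; rewrite !kE.
Qed.

Lemma taylor_hi (G : R -> R) (L M y : R) :
  (forall x : R, 0 < x -> derivable G x 1 /\ derivable (derive1 G) x 1 /\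
     (derive1 (derive1 G) x <= L)) -> 0 < M -> 0 < y ->
  G y <= G M + derive1 G M * (y - M) + L / 2 * (y - M) ^+ 2.
Proof.
move=> hG M0 y0.
have [c [c0 hc] E] := @taylor_gen G L M y (fun x hx => (hG x hx).1) M0 y0.
rewrite -subr_le0 E.
pose k := (L \*: id - derive1 G : R -> R).
have hk : forall x : R, 0 < x -> is_derive x 1 k (L - derive1 (derive1 G) x).
  move=> x x0; have [_ [h2 _]] := hG x x0.
  have h1 := @isder_G (derive1 G) x h2.
  eapply is_derive_eq; [rewrite /k; typeclasses eauto|].
  by rewrite /= scaler1.
have km : forall x y : R, 0 < x -> x <= y -> k x <= k y.
  apply: (@mono_pos k (fun x => L - derive1 (derive1 G) x) hk) => x x0; rewrite subr_ge0; have [_ [_ ]] := hG x x0; done.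
have kE : forall x, k x = L * x - derive1 G x by [].
have M' : (k c - k M) * (y - M) >= 0.
  case: (ltgtP c M) => [cM|Mc|->]; last by rewrite subrr mul0r.
  + have kcM : k c <= k M by apply: km => //; exact: ltW.
    have yM : y - M <= 0.
      rewrite leNgt; apply/negP => yM; move: hc; rewrite leNgt => /negP; apply.
      by rewrite pmulr_llt0 // subr_lt0.
    by apply: mulr_le0 => //; rewrite subr_le0.
  + have kcM : k M <= k c by apply: km => //; exact: ltW.
    have yM : 0 <= y - M.
      rewrite leNgt; apply/negP => yM; move: hc; rewrite leNgt => /negP; apply.
      by rewrite pmulr_rlt0 ?subr_gt0.
    by apply: mulr_ge0 => //; rewrite subr_ge0.
move: M'; rewrite !kE => M'.
have -> : (derive1 G c - L * c - (derive1 G M - L * M)) * (y - M) =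
  - ((L * c - derive1 G c - (L * M - derive1 G M)) * (y - M)) by ring.
by rewrite oppr_le0.
Qed.
End Taylor.
Section Prob.
Context (R : realType) (d : measure_display) (T : measurableType d)
  (P : probability T R) (N : nat) (w : nat -> T -> R) (mu sigma : nat -> R) (Delta : R).
Hypothesis D0 : 0 <= Delta.
Hypothesis mw : forall k, (k < N)%N -> measurable_fun setT (w k).
Hypothesis Ew : forall k, (k < N)%N -> ('E_P[w k] = (mu k)%:E)%E.
Hypothesis Vw : forall k, (k < N)%N -> ('V_P[w k] = (sigma k ^+ 2)%:E)%E.
Hypothesis Sw : forall k, (k < N)%N -> support_is P (w k) `[mu k - Delta, mu k + Delta].
Hypothesis mupos : forall k, (k < N)%N -> 0 < mu k - Delta.

Definition good t := forall k, (k < N)%N -> mu k - Delta <= w k t <= mu k + Delta.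

Lemma ae_itv k : (k < N)%N -> {ae P, forall t, mu k - Delta <= w k t <= mu k + Delta}.
Proof.
move=> hk; have [h1 _] := Sw k hk.
set S := `[mu k - Delta, mu k + Delta] in h1.
have mS : measurable (w k @^-1` [set` S]).
  by rewrite -[w k @^-1` _]setTI; apply: (mw k hk) => //; exact: measurable_itv.
exists (~` (w k @^-1` [set` S])); split.
- exact: measurableC.
- by rewrite probability_setC // h1 subee.
- move=> t /= ht; apply: ht; rewrite /S /= in_itv /= in ht *.
Qed.

Lemma ae_good : {ae P, forall t, good t}.
Proof.
suff H : forall n, (n <= N)%N ->
    {ae P, forall t, forall k, (k < n)%N -> mu k - Delta <= w k t <= mu k + Delta}.
  exact: H.
elim => [|n IH] hn; first by apply: aeW.
apply: filterS2 (IH (ltnW hn)) (ae_itv n hn) => t h1 h2 k.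
by rewrite ltnS leq_eqVlt => /orP[/eqP -> //|]; apply: h1.
Qed.

Definition pol (c : nat -> R) : nat -> R -> R := fun k x => Num.max 0 (c k - x).
Definition aa (c : nat -> R) k := if k is k'.+1 then c k - c k' + mu k' else c 0%N.
Definition clamp (x : R) := Num.max (- Delta) (Num.min Delta x).
Definition zc k t := if k is k'.+1 then clamp (w k' t - mu k') else 0.

Lemma clamp_id x : - Delta <= x <= Delta -> clamp x = x.
Proof. by case/andP => h1 h2; rewrite /clamp min_r // max_r. Qed.

Lemma clamp_bnd x : - Delta <= clamp x <= Delta.
Proof.
rewrite /clamp; apply/andP; split; first by rewrite le_max lexx.
rewrite ge_max ge_min lexx orTb andbT /=; have := D0; lra.
Qed.

Lemma pol_ge0 c k x : 0 <= pol c k x.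
Proof. by rewrite /pol le_max lexx. Qed.

Lemma pol_eq c k x : x <= c k -> pol c k x = c k - x.
Proof. by move=> h; rewrite /pol max_r // subr_ge0. Qed.

Section Cond.
Variable c : nat -> R.
Hypothesis hc1 : forall k, (k < N)%N -> mu k + Delta <= c k.
Hypothesis hc2 : forall k, (k.+1 < N)%N -> c k - mu k + Delta <= c k.+1.

Lemma state_good t : good t -> forall k, (k < N)%N ->
  state (pol c) w k t <= c k /\ state (pol c) w k.+1 t = c k - w k t.
Proof.
move=> g; elim => [|k IH] hk.
  have h0 : 0 <= c 0%N.
    have := hc1 0%N hk; have := mupos 0%N hk; have := D0; lra.
  split => //=; rewrite pol_eq /=; first by rewrite subr0 add0r.
  exact: h0.
have [_ e] := IH (ltnW hk).
have hx : state (pol c) w k.+1 t <= c k.+1.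
  rewrite e; have := hc2 k hk; have /andP[g1 _] := g k (ltnW hk); lra.
split => //.
have -> : state (pol c) w k.+2 t = state (pol c) w k.+1 t + pol c k.+1 (state (pol c) w k.+1 t) - w k.+1 t by [].
rewrite pol_eq //; ring.
Qed.

Lemma order_good t : good t -> forall k, (k < N)%N ->
  pol c k (state (pol c) w k t) = aa c k + zc k t.
Proof.
move=> g [|k] hk.
  by rewrite /= pol_eq /= ?subr0 ?addr0 //; have := hc1 0%N hk; have := mupos 0%N hk; have := D0; lra.
have [hx _] := state_good t g k.+1 hk.
have [_ e] := state_good t g k (ltnW hk).
rewrite pol_eq // e /= clamp_id; last by have := g k (ltnW hk); lra.
ring.
Qed.

Lemma state_ge0 t : good t -> forall k, (1 <= k <= N)%N -> 0 <= state (pol c) w k t.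
Proof.
move=> g [//|k] /andP[_ hk].
have [_ e] := state_good t g k hk.
rewrite e; have := hc1 k hk; have := g k hk; lra.
Qed.

End Cond.

Lemma mpol c k : measurable_fun setT (pol c k).
Proof.
apply: nonincreasing_measurable => // x y xy.
rewrite /pol ge_max !le_max lexx /=; apply/orP; right; lra.
Qed.

Lemma mstate c k : (k <= N)%N -> measurable_fun setT (state (pol c) w k).
Proof.
elim: k => [|k IH] hk; first exact: measurable_cst.
have IH' := IH (ltnW hk).
rewrite /=; apply: measurable_funB; last exact: mw.
apply: measurable_funD => //.
exact: measurableT_comp (mpol c k) IH'.
Qed.

Lemma mclamp : measurable_fun setT clamp.
Proof.
apply: nondecreasing_measurable => // x y xy.
rewrite /clamp ge_max !le_max lexx /=; apply/orP; right.
by rewrite le_min !ge_min lexx xy /= orbT.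
Qed.

Lemma mzc k : (k <= N)%N -> measurable_fun setT (zc k).
Proof.
case: k => [|k] hk; first exact: measurable_cst.
apply: measurableT_comp mclamp _.
by apply: measurable_funB; [exact: mw|exact: measurable_cst].
Qed.

Lemma zc_bnd k t : `|zc k t| <= Delta.
Proof.
case: k => [|k] /=; first by rewrite normr0 D0.
by rewrite ler_norml; exact: clamp_bnd.
Qed.

Lemma bint (f : T -> R) C : measurable_fun setT f -> (forall t, `|f t| <= C) ->
  P.-integrable setT (EFin \o f).
Proof.
move=> mf hf; apply: measurable_bounded_integrable => //.
  have h : (P [set: T] = 1)%E by exact: probability_setT.
  exact: (eq_ind_r (fun x : \bar R => (x < +oo)%E) (ltry 1) h).
exists C; split; first exact: num_real.
by move=> M hM t _; apply: le_trans (hf t) (ltW hM).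
Qed.

Lemma int_cst (r : R) : (\int[P]_t r%:E = r%:E)%E.
Proof.
rewrite integral_cst //; have h : (P [set: T] = 1)%E by exact: probability_setT.
exact: (eq_ind_r (fun x : \bar R => (r%:E * x)%E = r%:E) (mule1 _) h).
Qed.

Lemma int_zc k : (k < N)%N -> (\int[P]_t (zc k t)%:E = 0)%E.
Proof.
case: k => [|k] hk; first by rewrite integral0.
have hk' : (k < N)%N by apply: ltnW.
pose wc t := mu k + zc k.+1 t.
have mwc : measurable_fun setT wc.
  by apply: measurable_funD; [exact: measurable_cst|exact: mzc].
have iwc : P.-integrable setT (EFin \o wc).
  apply: (@bint _ (`|mu k| + Delta)) => // t.
  by rewrite /wc (le_trans (ler_normD _ _)) // lerD2l zc_bnd.
have icst : P.-integrable setT (EFin \o (fun _ : T => mu k)).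
  by apply: (@bint _ `|mu k|) => //; exact: measurable_cst.
transitivity (\int[P]_t ((wc t)%:E - (mu k)%:E))%E.
  by apply: eq_integral => t _; rewrite -EFinB /wc addrC addKr.
rewrite integralB_EFin // int_cst.
have -> : (\int[P]_t (wc t)%:E = \int[P]_t (w k t)%:E)%E.
  apply: ae_eq_integral => //.
  - exact/measurable_EFinP.
  - exact/measurable_EFinP/mw.
  - apply: filterS ae_good => t g _; congr EFin.
    rewrite /wc /= clamp_id; first by rewrite addrC subrK.
    by have := g k hk'; lra.
have E1 : (\int[P]_t (w k t)%:E = (mu k)%:E)%E by rewrite -(Ew k hk') expectation.unlock.
by rewrite E1 subee.
Qed.

Definition sv k := if k is k'.+1 then sigma k' ^+ 2 else 0.

Lemma int_zc2 k : (k < N)%N -> (\int[P]_t (zc k t ^+ 2)%:E = (sv k)%:E)%E.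
Proof.
case: k => [|k] hk.
  by rewrite /= (eq_integral (fun _ => 0%E)) ?integral0 // => t _; rewrite expr0n.
have hk' : (k < N)%N by apply: ltnW.
have V1 := Vw k hk'.
rewrite /variance covariance.unlock Ew // /= expectation.unlock in V1.
rewrite -V1 /sv.
apply: ae_eq_integral => //.
- apply/measurable_EFinP; rewrite (_ : (fun t => zc k.+1 t ^+ 2) = (fun t => zc k.+1 t * zc k.+1 t)); last by apply/funext => t; rewrite expr2.
  by apply: measurable_funM; exact: mzc.
- apply/measurable_EFinP. apply: measurable_funM;
    (apply: measurable_funB; [exact: mw|exact: measurable_cst]).
- apply: filterS ae_good => t g _; congr EFin.
  rewrite /= clamp_id; first by rewrite expr2.
  by have := g k hk'; lra.
Qed.


Lemma intD (f1 f2 : T -> R) : P.-integrable setT (EFin \o f1) -> P.-integrable setT (EFin \o f2) ->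
  (\int[P]_t (f1 t + f2 t)%:E = \int[P]_t (f1 t)%:E + \int[P]_t (f2 t)%:E)%E.
Proof.
move=> i1 i2.
rewrite (eq_integral (fun t => (f1 t)%:E + (f2 t)%:E)%E); last by move=> t _; rewrite /= EFinD.
exact: integralD_EFin.
Qed.

Lemma intZ (r : R) (f : T -> R) : P.-integrable setT (EFin \o f) ->
  (\int[P]_t (r * f t)%:E = r%:E * \int[P]_t (f t)%:E)%E.
Proof.
move=> i; rewrite (eq_integral (fun t => r%:E * (f t)%:E)%E); last by move=> t _; rewrite /= EFinM.
exact: integralZl.
Qed.

Lemma int_quad k (al be ga : R) : (k < N)%N ->
  (\int[P]_t (al + be * zc k t + ga * zc k t ^+ 2)%:E = (al + ga * sv k)%:E)%E.
Proof.
move=> hk.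
have mz := mzc k (ltnW hk).
have mz2 : measurable_fun setT (fun t => zc k t ^+ 2).
  rewrite (_ : (fun t => zc k t ^+ 2) = (fun t => zc k t * zc k t)); last by apply/funext => t; rewrite expr2.
  exact: measurable_funM.
have iz : P.-integrable setT (EFin \o zc k) by apply: (@bint _ Delta) => // t; exact: zc_bnd.
have iz2 : P.-integrable setT (EFin \o (fun t => zc k t ^+ 2)).
  apply: (@bint _ (Delta ^+ 2)) => // t; rewrite normrX expr2 [X in _ <= X]expr2.
  by apply: ler_pM => //; exact: zc_bnd.
have ic : P.-integrable setT (EFin \o (fun _ : T => al)).
  by apply: (@bint _ `|al|) => //; exact: measurable_cst.
have ibz : P.-integrable setT (EFin \o (fun t => be * zc k t)).
  apply: (@bint _ (`|be| * Delta)) => //; first by apply: measurable_funM => //; exact: measurable_cst.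
  by move=> t; rewrite normrM ler_wpM2l // zc_bnd.
have igz : P.-integrable setT (EFin \o (fun t => ga * zc k t ^+ 2)).
  apply: (@bint _ (`|ga| * Delta ^+ 2)) => //; first by apply: measurable_funM => //; exact: measurable_cst.
  move=> t; rewrite normrM ler_wpM2l // normrX expr2 [X in _ <= X]expr2.
  by apply: ler_pM => //; exact: zc_bnd.
have iab : P.-integrable setT (EFin \o (fun t => al + be * zc k t)).
  rewrite (_ : EFin \o _ = (fun t => ((al)%:E + (be * zc k t)%:E)%E)).
    exact: integrableD.
  by apply/funext => t; rewrite /= EFinD.
rewrite (@intD _ _ iab igz) (@intD _ _ ic ibz) int_cst (@intZ _ _ iz) (@intZ _ _ iz2) int_zc // int_zc2 //.
by rewrite mule0 adde0 -EFinM -EFinD.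
Qed.

Definition Gp (G : R -> R) x := G (Num.max 0 x).

Lemma mGp (G : R -> R) : (forall x y, 0 <= x -> x < y -> G x < G y) -> measurable_fun setT (Gp G).
Proof.
move=> Gm; apply: nondecreasing_measurable => // x y xy.
have h : Num.max 0 x <= Num.max 0 y.
  by rewrite ge_max !le_max lexx /= xy orbT.
rewrite /Gp; move: h; rewrite le_eqVlt => /orP[/eqP -> //|h].
by apply/ltW/Gm => //; rewrite le_max lexx.
Qed.


Lemma iquad k (al be ga : R) : (k < N)%N ->
  P.-integrable setT (EFin \o (fun t => al + be * zc k t + ga * zc k t ^+ 2)).
Proof.
move=> hk; have mz := mzc k (ltnW hk).
apply: (@bint _ (`|al| + `|be| * Delta + `|ga| * (Delta * Delta))).
  apply: measurable_funD; first apply: measurable_funD.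
  - exact: measurable_cst.
  - by apply: measurable_funM => //; exact: measurable_cst.
  apply: measurable_funM; first exact: measurable_cst.
  rewrite (_ : (fun t => zc k t ^+ 2) = (fun t => zc k t * zc k t)); last by apply/funext => t; rewrite expr2.
  exact: measurable_funM.
move=> t; apply: le_trans (ler_normD _ _) _; apply: lerD.
  apply: le_trans (ler_normD _ _) _; apply: lerD => //.
  by rewrite normrM ler_wpM2l // zc_bnd.
rewrite normrM ler_wpM2l // normrX expr2.
by apply: ler_pM => //; exact: zc_bnd.
Qed.

Section Cond2.
Variable c : nat -> R.
Hypothesis hc1 : forall k, (k < N)%N -> mu k + Delta <= c k.
Hypothesis hc2 : forall k, (k.+1 < N)%N -> c k - mu k + Delta <= c k.+1.
Variable G : R -> R.
Hypothesis Gm : forall x y, 0 <= x -> x < y -> G x < G y.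
Hypothesis G0 : G 0 = 0.

Lemma term_eq k : (k < N)%N -> Delta <= aa c k ->
  (\int[P]_t (G (pol c k (state (pol c) w k t)))%:E =
   \int[P]_t (G (aa c k + zc k t))%:E)%E.
Proof.
move=> hk ha.
apply: ae_eq_integral => //.
- rewrite (_ : (fun t => (G (pol c k (state (pol c) w k t)))%:E) =
     EFin \o (Gp G \o (pol c k \o state (pol c) w k))).
    apply/measurable_EFinP; apply: measurableT_comp; first exact: mGp.
    apply: measurableT_comp; first exact: mpol.
    exact: mstate (ltnW hk).
  by apply/funext => t; rewrite /= /Gp max_r // pol_ge0.
- rewrite (_ : (fun t => (G (aa c k + zc k t))%:E) =
     EFin \o (Gp G \o (fun t => aa c k + zc k t))).
    apply/measurable_EFinP; apply: measurableT_comp; first exact: mGp.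
    by apply: measurable_funD; [exact: measurable_cst|exact: mzc (ltnW hk)].
  apply/funext => t; rewrite /= /Gp max_r //.
  by have := zc_bnd k t; rewrite ler_norml; lra.
- apply: filterS ae_good => t g _.
  by rewrite (order_good c hc1 hc2 t g k hk).
Qed.

Lemma iGaz k : (k < N)%N -> Delta < aa c k ->
  P.-integrable setT (EFin \o (fun t => G (aa c k + zc k t))).
Proof.
move=> hk ha.
have pos : forall t, 0 < aa c k + zc k t.
  by move=> t; have := zc_bnd k t; rewrite ler_norml; lra.
apply: (@bint _ (G (aa c k + Delta))).
  rewrite (_ : (fun t => G (aa c k + zc k t)) = (Gp G \o (fun t => aa c k + zc k t))).
    apply: measurableT_comp; first exact: mGp.
    by apply: measurable_funD; [exact: measurable_cst|exact: mzc (ltnW hk)].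
  by apply/funext => t; rewrite /= /Gp max_r // ltW.
move=> t; have g0 : 0 <= G (aa c k + zc k t).
  by rewrite -G0; apply/ltW/Gm => //.
rewrite ger0_norm //.
have := zc_bnd k t; rewrite ler_norml => /andP[_ h].
move: h; rewrite le_eqVlt => /orP[/eqP -> //|h].
by apply/ltW/Gm; [exact: ltW | rewrite ltrD2l].
Qed.

Lemma term_lo k K M s1 : (k < N)%N -> Delta < aa c k ->
  (forall y, 0 < y -> G M + s1 * (y - M) + K / 2 * (y - M) ^+ 2 <= G y) ->
  ((G M + s1 * (aa c k - M) + K / 2 * (aa c k - M) ^+ 2 + K / 2 * sv k)%:E <=
   \int[P]_t (G (pol c k (state (pol c) w k t)))%:E)%E.
Proof.
move=> hk ha TL.
rewrite term_eq //; last exact: ltW.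
rewrite -(int_quad k _ (s1 + K * (aa c k - M)) _ hk).
apply: le_integral => //; first exact: iquad.
  exact: iGaz.
move=> t _; rewrite lee_fin.
have pos : 0 < aa c k + zc k t.
  by have := zc_bnd k t; rewrite ler_norml; lra.
apply: le_trans (TL _ pos); rewrite le_eqVlt; apply/orP; left; apply/eqP.
by rewrite !expr2; field.
Qed.

Lemma term_hi k K M s1 : (k < N)%N -> Delta < aa c k ->
  (forall y, 0 < y -> G y <= G M + s1 * (y - M) + K / 2 * (y - M) ^+ 2) ->
  (\int[P]_t (G (pol c k (state (pol c) w k t)))%:E <=
   (G M + s1 * (aa c k - M) + K / 2 * (aa c k - M) ^+ 2 + K / 2 * sv k)%:E)%E.
Proof.
move=> hk ha TL.
rewrite term_eq //; last exact: ltW.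
rewrite -(int_quad k _ (s1 + K * (aa c k - M)) _ hk).
apply: le_integral => //; first exact: iGaz.
  exact: iquad.
move=> t _; rewrite lee_fin.
have pos : 0 < aa c k + zc k t.
  by have := zc_bnd k t; rewrite ler_norml; lra.
apply: le_trans (TL _ pos) _; rewrite le_eqVlt; apply/orP; left; apply/eqP.
by rewrite !expr2; field.
Qed.

End Cond2.

Section Cond3.
Variable c : nat -> R.
Hypothesis hc1 : forall k, (k < N)%N -> mu k + Delta <= c k.
Hypothesis hc2 : forall k, (k.+1 < N)%N -> c k - mu k + Delta <= c k.+1.

Lemma adm_pol : admissible P N w (pol c).
Proof.
split.
  by move=> k hk; split; [exact: mpol | move=> x; exact: pol_ge0].
move=> k hk; apply: filterS ae_good => t g.
exact: (state_ge0 c hc1 hc2 t g k hk).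
Qed.

Variable G : R -> R.
Hypothesis Gm : forall x y, 0 <= x -> x < y -> G x < G y.
Hypothesis G0 : G 0 = 0.
Hypothesis ha : forall k, (k < N)%N -> Delta < aa c k.

Lemma cost_lo K M s1 :
  (forall y, 0 < y -> G M + s1 * (y - M) + K / 2 * (y - M) ^+ 2 <= G y) ->
  ((\sum_(k < N) (G M + s1 * (aa c k - M) + K / 2 * (aa c k - M) ^+ 2 + K / 2 * sv k))%:E
    <= cost P N G w (pol c))%E.
Proof.
move=> TL; rewrite /cost -sumEFin; apply: lee_sum => k _.
exact: (term_lo c hc1 hc2 G Gm G0 k K M s1 (ltn_ord k) (ha k (ltn_ord k)) TL).
Qed.

Lemma cost_hi K M s1 :
  (forall y, 0 < y -> G y <= G M + s1 * (y - M) + K / 2 * (y - M) ^+ 2) ->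
  (cost P N G w (pol c) <=
   (\sum_(k < N) (G M + s1 * (aa c k - M) + K / 2 * (aa c k - M) ^+ 2 + K / 2 * sv k))%:E)%E.
Proof.
move=> TL; rewrite /cost -sumEFin; apply: lee_sum => k _.
exact: (term_hi c hc1 hc2 G Gm G0 k K M s1 (ltn_ord k) (ha k (ltn_ord k)) TL).
Qed.

End Cond3.
End Prob.
Lemma sum_quad (R : realFieldType) (n : nat) (a sv : nat -> R) (GM s1 K M : R) :
  \sum_(k < n) a k = n%:R * M ->
  \sum_(k < n) (GM + s1 * (a k - M) + K / 2 * (a k - M) ^+ 2 + K / 2 * sv k) =
  n%:R * GM + K / 2 * (\sum_(k < n) (a k - M) ^+ 2 + \sum_(k < n) sv k).
Proof.
move=> ha; rewrite !big_split /= -!mulr_sumr.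
have -> : \sum_(k < n) (a k - M) = 0.
  by rewrite sumrB ha sumr_const card_ord mulr_natl subrr.
rewrite sumr_const card_ord mulr0 addr0 mulr_natl; ring.
Qed.

Lemma sum_take (R : realFieldType) (s : seq R) n : (n <= size s)%N ->
  \sum_(x <- take n s) x = \sum_(i < n) nth 0 s i.
Proof.
move=> h; rewrite (big_nth 0) size_takel // big_mkord.
by apply: eq_bigr => i _; rewrite nth_take.
Qed.

Lemma sum_shift1 (R : realFieldType) (n : nat) (f : nat -> R) :
  \sum_(1 <= k < n.+1) f k = \sum_(k < n) f k.+1.
Proof. by rewrite big_add1 /= big_mkord. Qed.
Theorem theorem2 (R : realType) (d : measure_display) (T : measurableType d)
  (P : probability T R) (N : nat) (G : R -> R) (w : nat -> T -> R)
  (mu sigma : nat -> R) (Delta l L : R) :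
  (1 <= N)%N ->
  (forall x y t, 0 <= x -> 0 <= y -> x != y -> 0 < t < 1 ->
     G (t * x + (1 - t) * y) < t * G x + (1 - t) * G y) ->
  (forall x y, 0 <= x -> x < y -> G x < G y) ->
  G 0 = 0 ->
  0 < l -> l <= L ->
  (forall y, 0 < y -> derivable G y 1 /\ derivable (derive1 G) y 1 /\
     l <= derive1 (derive1 G) y <= L) ->
  0 <= Delta ->
  (forall k, (k < N)%N -> measurable_fun setT (w k)) ->
  mutually_independent P N w ->
  (forall k, (k < N)%N -> ('E_P[w k] = (mu k)%:E)%E) ->
  (forall k, (k < N)%N -> ('V_P[w k] = (sigma k ^+ 2)%:E)%E) ->
  (forall k, (k < N)%N -> support_is P (w k) `[mu k - Delta, mu k + Delta]) ->
  (forall k, (k < N)%N -> 0 < mu k - Delta) ->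
  let M := (Delta + \sum_(k < N) mu k) / N%:R in
  let u := LS (mkseq (fun k => if k == 0%N then mu 0%N + Delta else mu k) N) in
  let S_u := \sum_(k < N) (nth 0 u k - M) ^+ 2 in
  let S_mu := (mu 0%N + Delta - M) ^+ 2 + \sum_(1 <= k < N) (mu k - M) ^+ 2 in
  let V := \sum_(k < N.-1) sigma k ^+ 2 in
  ((l / 2 * (S_mu + V) - L / 2 * (S_u + V))%:E <=
   cost P N G w (myopic mu Delta) - opt_cost P N G w)%E.
Proof.
intros N1 _ Gm G0 l0 lL G2 D0 mw _ Ew Vw Sw mupos.
cbv zeta.
set M := (Delta + \sum_(k < N) mu k) / N%:R.
set v := mkseq (fun k : nat => if k == 0%N then mu 0%N + Delta else mu k) N.
set u := LS v.
set V := \sum_(k < N.-1) sigma k ^+ 2.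
have [N' eN] : exists N', N = N'.+1 by exists N.-1; rewrite prednK.
subst N.
have mugt : forall k, (k < N'.+1)%N -> Delta < mu k by move=> k hk; have := mupos k hk; lra.
have Nr : (N'.+1%:R : R) != 0 by rewrite pnatr_eq0.
have MN : N'.+1%:R * M = Delta + \sum_(k < N'.+1) mu k by rewrite /M mulrC divfK.
have sum_pos : 0 < Delta + \sum_(k < N'.+1) mu k.
  have h0 : Delta < mu 0%N by apply: mugt.
  have hs : 0 <= \sum_(i < N') mu (lift ord0 i).
    apply: sumr_ge0 => i _; apply: ltW; apply: le_lt_trans D0 (mugt _ _).
    by rewrite /= ltnS ltn_ord.
  move: h0 hs; rewrite big_ord_recl /=; lra.
have Mpos : 0 < M by rewrite /M divr_gt0 // ltr0n.
have TLo : forall y, 0 < y -> G M + derive1 G M * (y - M) + l / 2 * (y - M) ^+ 2 <= G y.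
  move=> y y0; apply: (@taylor_lo R G l M y _ Mpos y0) => x x0.
  by have [h1 [h2 /andP[h3 _]]] := G2 x x0.
have THi : forall y, 0 < y -> G y <= G M + derive1 G M * (y - M) + L / 2 * (y - M) ^+ 2.
  move=> y y0; apply: (@taylor_hi R G L M y _ Mpos y0) => x x0.
  by have [h1 [h2 /andP[_ h3]]] := G2 x x0.
pose cm := fun k => mu k + Delta.
have hcm1 : forall k, (k < N'.+1)%N -> mu k + Delta <= cm k by move=> k _; rewrite /cm.
have hcm2 : forall k, (k.+1 < N'.+1)%N -> cm k - mu k + Delta <= cm k.+1.
  by move=> k hk; rewrite /cm; have := mugt _ hk; lra.
have ham : forall k, (k < N'.+1)%N -> Delta < aa R mu cm k.
  case=> [|k] hk /=; rewrite /cm.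
    by have := mugt 0%N hk; lra.
  by have := mugt _ hk; lra.
have LO := @cost_lo R d T P N'.+1 w mu sigma Delta D0 mw Ew Vw Sw mupos cm hcm1 hcm2 G Gm G0 ham
   l M (derive1 G M) TLo.
have e1 : \sum_(i < N') aa R mu cm (lift ord0 i) = \sum_(i < N') mu (lift ord0 i).
  by apply: eq_bigr => i _; rewrite lift0 /= /cm; ring.
have sam : \sum_(k < N'.+1) aa R mu cm k = N'.+1%:R * M.
  by rewrite MN !big_ord_recl e1 /= /cm addrA [mu 0%N + _]addrC.
rewrite sum_quad // in LO.
have eSmu : \sum_(k < N'.+1) (aa R mu cm k - M) ^+ 2 =
    (mu 0%N + Delta - M) ^+ 2 + \sum_(1 <= k < N'.+1) (mu k - M) ^+ 2.
  rewrite big_ord_recl sum_shift1 /=; congr (_ + _).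
  by apply: eq_bigr => i _; rewrite ?lift0 /= /cm; congr (_ ^+ 2); ring.
have eV : \sum_(k < N'.+1) sv R sigma k = V.
  by rewrite big_ord_recl /= add0r; apply: eq_bigr => i _; rewrite ?lift0.
rewrite eSmu eV in LO.
have [su allu pre tot] : [/\ size u = size v,
    all (fun x => Delta < x) v -> all (fun x => Delta < x) u,
    forall k, \sum_(x <- take k v) x <= \sum_(x <- take k u) x &
    \sum_(x <- v) x = \sum_(x <- u) x] := @LS_spec R Delta v.
have sv_ : size v = N'.+1 by rewrite size_mkseq.
have hv : all (fun x => Delta < x) v.
  rewrite /v /mkseq all_map; apply/allP => i; rewrite mem_iota add0n => hi /=.
  case: ifP => _; last exact: mugt.
  by have := mugt 0%N isT; have := D0; lra.
have hu : forall k, (k < N'.+1)%N -> Delta < nth 0 u k.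
  move=> k hk; have /allP := allu hv; apply; apply: mem_nth; by rewrite su sv_.
pose cu := fun k => \sum_(i < k.+1) nth 0 u i - \sum_(i < k) mu i.
have aau : forall k, aa R mu cu k = nth 0 u k.
  case=> [|k] /=; rewrite /cu.
    by rewrite big_ord1 big_ord0 subr0.
  rewrite [\sum_(i < k.+2) _]big_ord_recr [\sum_(i < k.+1) mu i]big_ord_recr /=; ring.
have vsum : forall k, (k < N'.+1)%N -> \sum_(i < k.+1) nth 0 v i = Delta + \sum_(i < k.+1) mu i.
  move=> k hk; rewrite !big_ord_recl nth_mkseq //=.
  have -> : \sum_(i < k) nth 0 v (lift ord0 i) = \sum_(i < k) mu (lift ord0 i).
    apply: eq_bigr => i _; rewrite lift0 nth_mkseq //=.
    by rewrite ltnS; apply: leq_trans (ltn_ord i) _; rewrite -ltnS.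
  ring.
have hcu1 : forall k, (k < N'.+1)%N -> mu k + Delta <= cu k.
  move=> k hk; have := pre k.+1; rewrite !sum_take ?su ?sv_ // vsum //.
  by rewrite /cu [\sum_(i < k.+1) mu i]big_ord_recr /=; lra.
have hcu2 : forall k, (k.+1 < N'.+1)%N -> cu k - mu k + Delta <= cu k.+1.
  by move=> k hk; have := aau k.+1; rewrite /=; have := hu k.+1 hk; lra.
have hau : forall k, (k < N'.+1)%N -> Delta < aa R mu cu k by move=> k hk; rewrite aau; exact: hu.
have HI := @cost_hi R d T P N'.+1 w mu sigma Delta D0 mw Ew Vw Sw mupos cu hcu1 hcu2 G Gm G0 hau
   L M (derive1 G M) THi.
have sau : \sum_(k < N'.+1) aa R mu cu k = N'.+1%:R * M.
  under eq_bigr do rewrite aau.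
  rewrite -sum_take ?su ?sv_ // take_oversize ?su ?sv_ // -tot.
  by rewrite -[in LHS](take_oversize (s := v) (leqnn _)) sv_ sum_take ?sv_ // vsum // MN.
rewrite sum_quad // eV in HI.
have eSu : \sum_(k < N'.+1) (aa R mu cu k - M) ^+ 2 = \sum_(k < N'.+1) (nth 0 u k - M) ^+ 2.
  by apply: eq_bigr => k _; rewrite aau.
rewrite eSu in HI.
have OP : (opt_cost P N'.+1 G w <= cost P N'.+1 G w (pol R cu))%E.
  rewrite /opt_cost; apply: ereal_inf_lbound; exists (pol R cu) => //.
  exact: (@adm_pol R d T P N'.+1 w mu Delta D0 mw Sw mupos cu hcu1 hcu2).
apply: le_trans (leeB LO (le_trans OP HI)).
rewrite -EFinB lee_fin; rewrite le_eqVlt; apply/orP; left; apply/eqP; ring.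
Qed.
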